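(* For every point set $X$ that is a permutation, $\mathrm{cGB}(X)\le \mathrm{WB}(X)+\mathrm{WB}'(X)$.
   Context: $X$ is a set of $n$ points that is a permutation, with $x$-coordinates $\{1,\dots,n\}$ and $y$-coordinates $\{1,\dots,n\}$; $B$ is a bounding box of $X$. Let $\mathcal L^V$ ($\mathcal L^H$) be the vertical (horizontal) lines with half-integral coordinate between $1/2$ and $n-1/2$. $\mathrm{WB}(X)$: for an ordering $\sigma$ of $\mathcal L^V$, process lines in order starting from $\{B\}$; each line $L$ splits the current vertical strip $S$ containing it and is charged the number of pairs of points of $X\cap S$ consecutive in increasing $y$-order that lie on opposite sides of $L$; $\mathrm{WB}_\sigma(X)$ is the total charge and $\mathrm{WB}(X)=\max_\sigma\mathrm{WB}_\sigma(X)$. $\mathrm{WB}'(X)$ is defined symmetrically with horizontal lines: for orderings of $\mathcal L^H$, each line splits the current horizontal strip containing it and is charged the number of pairs of points of the strip consecutive in increasing $x$-order lying on opposite sides; maximize over orderings (equivalently, $\mathrm{WB}'(X)=\mathrm{WB}$ of $X$ rotated by $90^\circ$). $\mathrm{cGB}(X)$: for an ordering $\sigma$ of $\mathcal L^V\cup\mathcal L^H$, start with $\mathcal P=\{B\}$ and process lines in order; when $L$ is processed every rectangle $P\in\mathcal P$ intersecting $L$ is replaced by the two rectangles into which $L$ splits it, costing the number of pairs of points of $X\cap P$ consecutive in increasing $y$-order (if $L$ vertical) or in increasing $x$-order (if $L$ horizontal) lying on opposite sides of $L$. $\mathrm{cGB}_\sigma(X)$ is the total cost and $\mathrm{cGB}(X)=\max_\sigma\mathrm{cGB}_\sigma(X)$.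 *)

(* Defs.v *)
From mathcomp Require Import all_boot perm.
Set Implicit Arguments. Unset Strict Implicit. Unset Printing Implicit Defensive.

(* A permutation point set X of size n is given by
   p : 'S_n ; its points are (i, p i) for i : 'I_n (0-indexed coordinates; the
   paper's point (x,y) with x,y in {1..n} corresponds to (x-1, y-1)).
   The paper's line with coordinate k + 1/2 (k = 0..n-1) is here the line with
   index k : 'I_n, separating coordinates < k from coordinates >= k.
   Lines: inl k = vertical line, inr k = horizontal line.
   A rectangle ((xl,xh),(yl,yh)) is the region containing exactly the grid
   coordinates xl <= x < xh, yl <= y < yh; line k meets its interior iff
   xl < k < xh (resp. yl < k < yh). *)

Section GB.
Variables (n : nat) (p : 'S_n).

Local Notation line := ((ordinal n) + (ordinal n))%type.
Definition rect := ((nat * nat) * (nat * nat))%type.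

Definition bbox : rect := ((0, n), (0, n)).

Definition inRect (r : rect) (i : 'I_n) : bool :=
  (r.1.1 <= i < r.1.2) && (r.2.1 <= p i < r.2.2).

Definition ycons (S : pred 'I_n) (a b : 'I_n) : bool :=
  [&& S a, S b, p a < p b & [forall c : 'I_n, S c ==> ~~ (p a < p c < p b)]].

Definition xcons (S : pred 'I_n) (a b : 'I_n) : bool :=
  [&& S a, S b, (a < b)%N & [forall c : 'I_n, S c ==> ~~ (a < c < b)]].

Definition costV (S : pred 'I_n) (k : nat) : nat :=
  #|[set ab : 'I_n * 'I_n | ycons S ab.1 ab.2 && ((ab.1 < k) != (ab.2 < k))]|.

Definition costH (S : pred 'I_n) (k : nat) : nat :=
  #|[set ab : 'I_n * 'I_n | xcons S ab.1 ab.2 && ((p ab.1 < k) != (p ab.2 < k))]|.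

Definition meets (L : line) (r : rect) : bool :=
  match L with
  | inl k => r.1.1 < k < r.1.2
  | inr k => r.2.1 < k < r.2.2
  end.

Definition cost (L : line) (r : rect) : nat :=
  if meets L r then
    match L with
    | inl k => costV (inRect r) k
    | inr k => costH (inRect r) k
    end
  else 0.

Definition split (L : line) (r : rect) : seq rect :=
  if meets L r then
    match L with
    | inl k => [:: ((r.1.1, val k), r.2); ((val k, r.1.2), r.2)]
    | inr k => [:: (r.1, (r.2.1, val k)); (r.1, (val k, r.2.2))]
    end
  else [:: r].

Fixpoint run (P : seq rect) (s : seq line) : nat :=
  match s with
  | [::] => 0
  | L :: s' => (\sum_(r <- P) cost L r) + run (flatten [seq split L r | r <- P]) s'
  end.

Definition cGB : nat :=
  \max_(sigma : {perm line}) run [:: bbox] [seq sigma L | L <- enum {: line}].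

(* WB: orderings of the vertical lines only; the current pieces are the
   vertical strips (full-height rectangles), each line splits the unique strip
   it meets and is charged the y-consecutive pairs of that strip it separates. *)
Definition WB : nat :=
  \max_(sigma : {perm 'I_n}) run [:: bbox] [seq inl (sigma k) | k <- enum 'I_n].

(* WB': the symmetric version with horizontal lines / horizontal strips and
   x-consecutive pairs. *)
Definition WB' : nat :=
  \max_(sigma : {perm 'I_n}) run [:: bbox] [seq inr (sigma k) | k <- enum 'I_n].

End GB.

(* Main.v *)
Require Import Defs.
From mathcomp Require Import all_boot perm.
From mathcomp Require Import zify.

Section Proof.
Variables (n : nat) (p : 'S_n).
Local Notation line := ((ordinal n) + (ordinal n))%type.

Definition getl (L : line) : option 'I_n := if L is inl k then Some k else None.
Definition getr (L : line) : option 'I_n := if L is inr k then Some k else None.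

Lemma costV_sum (S : pred 'I_n) k :
  costV p S k = \sum_(ab : 'I_n * 'I_n) (ycons p S ab.1 ab.2 && ((ab.1 < k) != (ab.2 < k)) : nat).
Proof.
rewrite /costV -sum1_card big_mkcond /=; apply: eq_bigr => ab _.
by rewrite inE; case: ifP.
Qed.

Lemma costH_sum (S : pred 'I_n) k :
  costH p S k = \sum_(ab : 'I_n * 'I_n) (xcons S ab.1 ab.2 && ((p ab.1 < k) != (p ab.2 < k)) : nat).
Proof.
rewrite /costH -sum1_card big_mkcond /=; apply: eq_bigr => ab _.
by rewrite inE; case: ifP.
Qed.

Lemma costVE k r : cost p (inl k) r = costV p (inRect p r) k.
Proof.
rewrite /cost /=; case: ifP => // nm.
rewrite costV_sum big1 // => -[a b] _ /=.
case: (boolP (ycons _ _ _ _)) => //= /and4P [ra rb _ _].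
move: ra rb nm; rewrite /inRect => /andP [ra _] /andP [rb _] nm.
apply/eqP; rewrite eqb0 negbK; apply/eqP.
move: ra rb nm; case: (a < k) / ltnP; case: (b < k) / ltnP => //=; lia.
Qed.

Lemma costHE k r : cost p (inr k) r = costH p (inRect p r) k.
Proof.
rewrite /cost /=; case: ifP => // nm.
rewrite costH_sum big1 // => -[a b] _ /=.
case: (boolP (xcons _ _ _)) => //= /and4P [ra rb _ _].
move: ra rb nm; rewrite /inRect => /andP [_ ra] /andP [_ rb] nm.
apply/eqP; rewrite eqb0 negbK; apply/eqP.
move: ra rb nm; case: (p a < k) / ltnP; case: (p b < k) / ltnP => //=; lia.
Qed.


Lemma split_inRect (L : line) r i :
  \sum_(r' <- Defs.split L r) (inRect p r' i : nat) = inRect p r i.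
Proof.
rewrite /Defs.split; case: L => k; case: ifP => m; rewrite !big_cons big_nil ?addn0 //=;
  rewrite /inRect /= in m *.
- case: (r.2.1 <= p i < r.2.2); rewrite ?andbT ?andbF //.
  move: m; case E1: (r.1.1 <= i); case E2: (i < k); case E3: (i < r.1.2);
    case E4: (k <= i) => //=; lia.
- case: (r.1.1 <= i < r.1.2); rewrite //=.
  move: m; case E1: (r.2.1 <= p i); case E2: (p i < k); case E3: (p i < r.2.2);
    case E4: (k <= p i) => //=; lia.
Qed.

Lemma ycons_lift r a b : ycons p (inRect p r) a b -> ycons p (inRect p (r.1, (0, n))) a b.
Proof.
case/and4P => ra rb ab /forallP H; apply/and4P; split => //.
- by move: ra; rewrite /inRect /= ltn_ord andbT => /andP[].
- by move: rb; rewrite /inRect /= ltn_ord andbT => /andP[].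
apply/forallP => c; apply/implyP; rewrite /inRect /= ltn_ord andbT => cx.
apply/negP => /andP [ac cb]; move: (H c); rewrite /inRect cx /=.
move: ra rb; rewrite /inRect => /andP [_ /andP [ya _]] /andP [_ /andP [_ yb]].
rewrite ac cb (leq_trans ya (ltnW ac)) (ltn_trans cb yb) //.
Qed.

Lemma xcons_lift r a b : xcons (inRect p r) a b -> xcons (inRect p ((0, n), r.2)) a b.
Proof.
case/and4P => ra rb ab /forallP H; apply/and4P; split => //.
- by move: ra; rewrite /inRect /= ltn_ord => /andP[].
- by move: rb; rewrite /inRect /= ltn_ord => /andP[].
apply/forallP => c; apply/implyP; rewrite /inRect /= ltn_ord /= => cy.
apply/negP => /andP [ac cb]; move: (H c); rewrite /inRect cy /= andbT.
move: ra rb; rewrite /inRect => /andP [/andP [xa _] _] /andP [/andP [_ xb] _].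
rewrite ac cb (leq_trans xa (ltnW ac)) (ltn_trans cb xb) //.
Qed.


Definition I1 (P : seq rect) := forall i, \sum_(r <- P) (inRect p r i : nat) <= 1.
Definition I2 (P Qv : seq rect) := forall r, r \in P -> (r.1, (0, n)) \in Qv.
Definition I3 (P Qh : seq rect) := forall r, r \in P -> ((0, n), r.2) \in Qh.

Lemma stepV k P Qv : I1 P -> I2 P Qv ->
  \sum_(r <- P) cost p (inl k) r <= \sum_(q <- Qv) cost p (inl k) q.
Proof.
move=> h1 h2.
under eq_bigr do rewrite costVE costV_sum.
under [X in _ <= X]eq_bigr do rewrite costVE costV_sum.
rewrite exchange_big [X in _ <= X]exchange_big /=; apply: leq_sum => -[a b] _ /=.
set c := ((a < k) != (b < k)).
case: (boolP (has (fun r => ycons p (inRect p r) a b && c) P)).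
- case/hasP => r rP /andP [yr cr].
  apply: (@leq_trans 1).
  + apply: leq_trans (h1 a); apply: leq_sum => r' _.
    case: (boolP (ycons _ _ a b)) => //= /and4P [-> _ _ _]; exact: leq_b1.
  + by rewrite (big_rem (r.1, (0, n))) ?h2 //= (ycons_lift _ _ _ yr) cr /= leq_addr.
- move/hasPn => H; rewrite big1_seq // => r /andP [_ rP]; by rewrite (negbTE (H r rP)).
Qed.

Lemma stepH k P Qh : I1 P -> I3 P Qh ->
  \sum_(r <- P) cost p (inr k) r <= \sum_(q <- Qh) cost p (inr k) q.
Proof.
move=> h1 h3.
under eq_bigr do rewrite costHE costH_sum.
under [X in _ <= X]eq_bigr do rewrite costHE costH_sum.
rewrite exchange_big [X in _ <= X]exchange_big /=; apply: leq_sum => -[a b] _ /=.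
set c := ((p a < k) != (p b < k)).
case: (boolP (has (fun r => xcons (inRect p r) a b && c) P)).
- case/hasP => r rP /andP [yr cr].
  apply: (@leq_trans 1).
  + apply: leq_trans (h1 a); apply: leq_sum => r' _.
    case: (boolP (xcons _ a b)) => //= /and4P [-> _ _ _]; exact: leq_b1.
  + by rewrite (big_rem ((0, n), r.2)) ?h3 //= (xcons_lift _ _ _ yr) cr /= leq_addr.
- move/hasPn => H; rewrite big1_seq // => r /andP [_ rP]; by rewrite (negbTE (H r rP)).
Qed.


Lemma I1_split (L : line) P : I1 P -> I1 (flatten [seq Defs.split L r | r <- P]).
Proof.
move=> h i; rewrite big_flatten big_map /=.
under eq_bigr do rewrite split_inRect; exact: h.
Qed.

Lemma split_memV (k : 'I_n) r r' : r' \in Defs.split (inl k) r ->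
  (r'.1, (0, n)) \in Defs.split (inl k) (r.1, (0, n)).
Proof.
rewrite /Defs.split /=; case: ifP => _; rewrite !inE.
- by case/orP => /eqP -> /=; rewrite eqxx ?orbT.
- by move/eqP ->.
Qed.

Lemma split_memH (k : 'I_n) r r' : r' \in Defs.split (inr k) r ->
  ((0, n), r'.2) \in Defs.split (inr k) ((0, n), r.2).
Proof.
rewrite /Defs.split /=; case: ifP => _; rewrite !inE.
- by case/orP => /eqP -> /=; rewrite eqxx ?orbT.
- by move/eqP ->.
Qed.

Lemma split_fstH (k : 'I_n) r r' : r' \in Defs.split (inr k) r -> r'.1 = r.1.
Proof.
rewrite /Defs.split /=; case: ifP => _; rewrite !inE.
- by case/orP => /eqP ->.
- by move/eqP ->.
Qed.

Lemma split_sndV (k : 'I_n) r r' : r' \in Defs.split (inl k) r -> r'.2 = r.2.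
Proof.
rewrite /Defs.split /=; case: ifP => _; rewrite !inE.
- by case/orP => /eqP ->.
- by move/eqP ->.
Qed.

Lemma main s : forall P Qv Qh, I1 P -> I2 P Qv -> I3 P Qh ->
  run p P s <= run p Qv (map inl (pmap getl s)) + run p Qh (map inr (pmap getr s)).
Proof.
elim: s => [|L s IH] P Qv Qh h1 h2 h3 //=.
case: L => k /=.
- rewrite -addnA leq_add ?stepV // IH //; first exact: I1_split.
  + move=> r' /flatten_mapP [r rP r'S]; apply/flatten_mapP.
    by exists (r.1, (0, n)); [exact: h2 | exact: split_memV r'S].
  + move=> r' /flatten_mapP [r rP r'S].
    by rewrite (split_sndV _ _ _ r'S); exact: h3.
- rewrite addnCA leq_add ?stepH // IH //; first exact: I1_split.
  + move=> r' /flatten_mapP [r rP r'S].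
    by rewrite (split_fstH _ _ _ r'S); exact: h2.
  + move=> r' /flatten_mapP [r rP r'S]; apply/flatten_mapP.
    by exists ((0, n), r.2); [exact: h3 | exact: split_memH r'S].
Qed.


Lemma getl_perm (s : seq line) : uniq s -> (forall L, L \in s) ->
  perm_eq (pmap getl s) (enum 'I_n).
Proof.
move=> us alls; apply: uniq_perm; first by apply: (@pmap_uniq _ _ _ inl) => //; case.
- exact: enum_uniq.
- move=> k; rewrite mem_pmap mem_enum; apply: (map_f getl (alls (inl k))).
Qed.

Lemma getr_perm (s : seq line) : uniq s -> (forall L, L \in s) ->
  perm_eq (pmap getr s) (enum 'I_n).
Proof.
move=> us alls; apply: uniq_perm; first by apply: (@pmap_uniq _ _ _ inr) => //; case.
- exact: enum_uniq.
- move=> k; rewrite mem_pmap mem_enum; apply: (map_f getr (alls (inr k))).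
Qed.

End Proof.

Theorem lemma5p2 (n : nat) (p : 'S_n) : (cGB p <= WB p + WB' p)%N.
Proof.
rewrite /cGB; apply/bigmax_leqP => sigma _.
set s := [seq sigma L | L <- enum _].
have us : uniq s by rewrite map_inj_uniq ?enum_uniq //; exact: perm_inj.
have alls : forall L, L \in s.
  by move=> L; rewrite -(permKV sigma L) map_f // mem_enum.
apply: leq_trans (@main n p s [:: bbox n] [:: bbox n] [:: bbox n] _ _ _) _.
- by move=> i; rewrite big_cons big_nil addn0 leq_b1.
- by move=> r; rewrite inE => /eqP ->; rewrite inE.
- by move=> r; rewrite inE => /eqP ->; rewrite inE.
apply: leq_add.
- have := @getl_perm n s us alls.
  rewrite -[enum 'I_n]/(val (ord_tuple n)) => /tuple_permP [sig ->].
  rewrite /WB; apply: leq_trans (leq_bigmax sig).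
  rewrite /= -map_comp; apply: eq_leq; congr (run _ _ _); apply: eq_map => i /=.
  by rewrite tnth_ord_tuple.
- have := @getr_perm n s us alls.
  rewrite -[enum 'I_n]/(val (ord_tuple n)) => /tuple_permP [sig ->].
  rewrite /WB'; apply: leq_trans (leq_bigmax sig).
  rewrite /= -map_comp; apply: eq_leq; congr (run _ _ _); apply: eq_map => i /=.
  by rewrite tnth_ord_tuple.
Qed.
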